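(* Let $\mathbf{w}=(\mathbf{w}_1,\dots,\mathbf{w}_{d+1})\in\mathbb{R}^{d+1}$ with $\|\mathbf{w}\|_2=1$, $\mathbf{w}_1\le 1/\sqrt2$, $\mathbf{w}_2=\dots=\mathbf{w}_{d+1}$ and $|\mathbf{w}_2|\ge 1/\sqrt{2d}$. If $\epsilon_\infty\ge\frac{2}{d}\epsilon_1$ and $\epsilon_\infty\ge\sqrt{\frac{2}{d}}\,\epsilon_2$, then the $\ell_\infty$-player dominates the $\ell_1$-player and the $\ell_2$-player, i.e. for every $(\mathbf{x},y)$, $1-y\mathbf{w}^\top(\mathbf{x}+\boldsymbol{\delta}_\infty)>1-y\mathbf{w}^\top(\mathbf{x}+\boldsymbol{\delta}_1)$ and $1-y\mathbf{w}^\top(\mathbf{x}+\boldsymbol{\delta}_\infty)>1-y\mathbf{w}^\top(\mathbf{x}+\boldsymbol{\delta}_2)$; in other words, the MAX/MSD training procedure for the soft-SVM model cannot converge.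
   Context: For $\mathbf{x}\in\mathbb{R}^{d+1}$, $y\in\{-1,+1\}$ and weights $\mathbf{w}$, the three players' (optimal) perturbations are $\boldsymbol{\delta}_\infty=-y\epsilon_\infty\operatorname{sign}(\mathbf{w})$, $\boldsymbol{\delta}_1=-y\epsilon_1\mathbf{w}/\|\mathbf{w}\|_1$, $\boldsymbol{\delta}_2=-y\epsilon_2\mathbf{w}/\|\mathbf{w}\|_2$, with budgets $\epsilon_1,\epsilon_2,\epsilon_\infty>0$. The soft-SVM model with MAX/MSD updates at each step the unit-norm weights using only the perturbation that incurs the largest soft-SVM loss $\max(0,1-y\mathbf{w}^\top(\mathbf{x}+\boldsymbol{\delta}))$. *)

(* Defs.v *)
From mathcomp Require Import all_boot all_order all_algebra.
Set Implicit Arguments. Unset Strict Implicit. Unset Printing Implicit Defensive.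
Import Order.TTheory GRing.Theory Num.Theory.
Local Open Scope ring_scope.

Section Defs.
Variables (R : rcfType) (n : nat).

Definition dotv (u v : 'rV[R]_n) : R := \sum_i u 0 i * v 0 i.
Definition norm1 (w : 'rV[R]_n) : R := \sum_i `|w 0 i|.
Definition norm2 (w : 'rV[R]_n) : R := Num.sqrt (\sum_i w 0 i ^+ 2).
Definition signv (w : 'rV[R]_n) : 'rV[R]_n := map_mx (fun a => Num.sg a) w.

Definition delta_inf (y e : R) (w : 'rV[R]_n) : 'rV[R]_n := (- (y * e)) *: signv w.
Definition delta_1 (y e : R) (w : 'rV[R]_n) : 'rV[R]_n := (- (y * e) / norm1 w) *: w.
Definition delta_2 (y e : R) (w : 'rV[R]_n) : 'rV[R]_n := (- (y * e) / norm2 w) *: w.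

(* the quantity 1 - y w^T (x + delta) (argument of the soft-SVM hinge loss) *)
Definition svm_margin_loss (w x delta : 'rV[R]_n) (y : R) : R := 1 - y * dotv w (x + delta).
End Defs.

(* Main.v *)
Require Import Defs.
From mathcomp Require Import all_boot all_order all_algebra.
From mathcomp Require Import ring lra.
Import Order.TTheory GRing.Theory Num.Theory.
Local Open Scope ring_scope.

Lemma dotvD (R : rcfType) n (u v v' : 'rV[R]_n) :
  dotv u (v + v') = dotv u v + dotv u v'.
Proof. rewrite /dotv -big_split; apply: eq_bigr => i _; by rewrite mxE mulrDr. Qed.

Lemma dotvZ (R : rcfType) n (u v : 'rV[R]_n) c :
  dotv u (c *: v) = c * dotv u v.
Proof. rewrite /dotv mulr_sumr; apply: eq_bigr => i _; by rewrite mxE mulrCA. Qed.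

Lemma dot_sign (R : rcfType) n (w : 'rV[R]_n) : dotv w (signv w) = norm1 w.
Proof.
rewrite /dotv /norm1; apply: eq_bigr => i _; rewrite mxE.
by rewrite [X in _ = X]normrEsg mulrC.
Qed.

Lemma sum_split (R : rcfType) d (w : 'rV[R]_(d.+1)) (f : R -> R) :
  (forall i : 'I_(d.+1), (0 < i)%N -> w 0 i = w 0 (inord 1)) ->
  \sum_i f (w 0 i) = f (w 0 ord0) + d%:R * f (w 0 (inord 1)).
Proof.
move=> Hw; rewrite big_ord_recl; congr (_ + _).
rewrite (eq_bigr (fun _ => f (w 0 (inord 1)))); last first.
  by move=> i _; rewrite Hw.
by rewrite sumr_const card_ord mulr_natl.
Qed.

Theorem lemma6 (R : rcfType) (d : nat) (w : 'rV[R]_(d.+1))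
  (e1 e2 einf : R) :
  (0 < d)%N ->
  norm2 w = 1 ->
  w 0 ord0 <= 1 / Num.sqrt 2 ->
  (forall i : 'I_(d.+1), (0 < i)%N -> w 0 i = w 0 (inord 1)) ->
  `|w 0 (inord 1)| >= 1 / Num.sqrt (2 * d%:R) ->
  0 < e1 -> 0 < e2 -> 0 < einf ->
  einf >= 2 / d%:R * e1 ->
  einf >= Num.sqrt (2 / d%:R) * e2 ->
  forall (x : 'rV[R]_(d.+1)) (y : R), (y = 1 \/ y = -1) ->
    svm_margin_loss w x (delta_inf y einf w) y > svm_margin_loss w x (delta_1 y e1 w) y /\
    svm_margin_loss w x (delta_inf y einf w) y > svm_margin_loss w x (delta_2 y e2 w) y.
Proof.
move=> d0 Hn2 Ha Hw Hb he1 he2 hei He1 He2 x y Hy.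
set k : R := d%:R.
have k1 : 1 <= k by rewrite /k ler1n.
set a := w 0 ord0; set b := w 0 (inord 1).
have HQ : \sum_i w 0 i ^+ 2 = 1.
  have h0 : 0 <= \sum_i w 0 i ^+ 2 by apply: sumr_ge0 => i _; exact: sqr_ge0.
  by rewrite -(sqr_sqrtr h0) -/(norm2 w) Hn2 expr1n.
have HQ' : a ^+ 2 + k * b ^+ 2 = 1.
  by rewrite -HQ (@sum_split _ _ _ (fun t => t ^+ 2) Hw).
have HS : norm1 w = `|a| + k * `|b|.
  by rewrite /norm1 (@sum_split _ _ _ (fun t => `|t|) Hw).
have Hb2 : 1 / (2 * k) <= b ^+ 2.
  have h2k : 0 <= 2 * k by lra.
  rewrite -[b ^+ 2]real_normK ?num_real //.
  rewrite -[1 / (2 * k)](@sqr_sqrtr _ (1 / (2*k))); last by rewrite divr_ge0.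
  rewrite lerXn2r ?nnegrE ?sqrtr_ge0 //.
  by rewrite div1r sqrtrV // -div1r.
have kb2 : 1 / 2 <= k * b ^+ 2.
  have h2k : 0 < 2 * k by lra.
  move: Hb2; rewrite ler_pdivrMr //; lra.
set S := norm1 w.
have S0 : 0 < S.
  rewrite /S HS; have := normr_ge0 a; have : 0 < `|b|.
    rewrite normr_gt0; apply/eqP => b0; move: kb2; rewrite b0; lra.
  move=> h1 h2; have : 0 < k * `|b| by rewrite mulr_gt0 //; lra.
  lra.
have S2 : k / 2 < S ^+ 2.
  rewrite /S HS.
  have ea : `|a| ^+ 2 = a ^+ 2 by rewrite real_normK ?num_real.
  have eb : `|b| ^+ 2 = b ^+ 2 by rewrite real_normK ?num_real.
  have hab : 0 <= `|a| * `|b| by rewrite mulr_ge0.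
  have hkt : 0 <= (k - 1) * (k * b ^+ 2 - 1 / 2) by rewrite mulr_ge0 //; lra.
  nra.
have key1 : e1 / S < einf * S.
  rewrite ltr_pdivrMr //.
  have hk : 0 < k by lra.
  have : 2 * e1 <= einf * k.
    move: He1; rewrite -/k mulrAC ler_pdivrMr //.
  have : 0 < einf * (S ^+ 2 - k / 2) by rewrite mulr_gt0 // subr_gt0.
  nra.
have key2 : e2 < einf * S.
  have hk : 0 < k by lra.
  set s := Num.sqrt (2 / d%:R) in He2.
  have s0 : 0 <= s by exact: sqrtr_ge0.
  have s2 : s ^+ 2 * k = 2.
    rewrite sqr_sqrtr; last by rewrite divr_ge0 // ler0n.
    by rewrite -/k mulfVK //; lra.
  have hei2 : s ^+ 2 * e2 ^+ 2 <= einf ^+ 2.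
    rewrite -exprMn lerXn2r ?nnegrE; by try nra.
  have h3 : e2 ^+ 2 < (einf * S) ^+ 2.
    have : 0 < einf ^+ 2 * (S ^+ 2 - k / 2) by rewrite mulr_gt0 ?exprn_gt0 // subr_gt0.
    nra.
  have : 0 < einf * S by rewrite mulr_gt0.
  nra.
have dww : dotv w w = 1 by rewrite -HQ; apply: eq_bigr => i _; rewrite expr2.
rewrite /svm_margin_loss /delta_inf /delta_1 /delta_2 !dotvD !dotvZ dot_sign dww Hn2 -/S.
case: Hy => ->; split; lra.
Qed.
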